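(* Let $G$ be a bipartite graph between $U$ and $V$ with edge weights in $\{-1,+1\}$, and let $d>0$. Suppose every $u\in U$ satisfies $|F(u)|\le 1.2d$ and $|F^+(u)|\ge 0.45d$. Let $S\subseteq U$ have the $11/12$-strong unique neighbour property, let $h=\mathbf 1_S$ and $y=\operatorname{sgn}(Gh)$, i.e. $y_v=\operatorname{sgn}\big(\sum_{u\in S,\,v\in F(u)}w(u,v)\big)$. Define $\hat h\in\{0,1\}^U$ by $\hat h_u=1$ if and only if $|\{v\in F^+(u): y_v=1\}|>0.3d$ (equivalently $\hat h=\operatorname{sgn}(M^{T}y-0.3d\,\mathbf 1)$ where $M$ is the $V\times U$ $0/1$ indicator matrix of the $+1$ edges). Then $\hat h=h$.
   Context: $\operatorname{sgn}(x)=1$ if $x>0$ and $0$ otherwise, coordinatewise. For $u\in U$, $F(u)\subseteq V$ is its set of neighbours and $F^+(u)=\{v\in F(u):w(u,v)=+1\}$; for $T\subseteq U$, $F(T)=\bigcup_{u\in T}F(u)$. For $u\in U$ and $S\subseteq U$, the unique neighbours of $u$ w.r.t. $S$ are $\mathrm{UF}(u,S)=\{v\in F(u): v\notin F(S\setminus\{u\})\}$. A node $u$ has the $(1-\epsilon)$-unique neighbour property w.r.t. $S$ if $\sum_{v\in \mathrm{UF}(u,S)}|w(u,v)|\ge(1-\epsilon)\sum_{v\in F(u)}|w(u,v)|$; the set $S$ has the $(1-\epsilon)$-strong unique neighbour property if every $u\in U$ (whether or not $u\in S$) has the $(1-\epsilon)$-unique neighbour property w.r.t. $S$. *)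

(* Defs.v *)
From HB Require Import structures.
From mathcomp Require Import all_boot all_order all_algebra.
Set Implicit Arguments. Unset Strict Implicit. Unset Printing Implicit Defensive.
Import Order.TTheory GRing.Theory Num.Theory.
Local Open Scope ring_scope.

(* A weighted bipartite graph between finite U and V is given by its weight
   function w : U -> V -> int; (u,v) is an edge iff w u v != 0.
   Edge weights in {-1,+1} is the hypothesis that w only takes values -1,0,1. *)
Section Graph.
Variables (U V : finType) (w : U -> V -> int).

Definition F (u : U) : {set V} := [set v | w u v != 0].
Definition Fplus (u : U) : {set V} := [set v in F u | w u v == 1].
Definition FT (T : {set U}) : {set V} := \bigcup_(u in T) F u.
Definition UF (u : U) (S : {set U}) : {set V} :=
  [set v in F u | v \notin FT (S :\ u)].

(* (1 - eps)-unique neighbour property, with c = 1 - eps *)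
Definition unique_nb_prop (R : numFieldType) (c : R) (u : U) (S : {set U}) :=
  c * (\sum_(v in F u) `|w u v|)%:~R <= (\sum_(v in UF u S) `|w u v|)%:~R :> R.

Definition strong_unique_nb_prop (R : numFieldType) (c : R) (S : {set U}) :=
  forall u : U, unique_nb_prop c u S.

Definition sgn (x : int) : bool := (0 < x)%R.

Definition yvec (S : {set U}) (v : V) : bool :=
  sgn (\sum_(u in S | v \in F u) w u v).

Definition hhat (R : numFieldType) (d : R) (S : {set U}) (u : U) : bool :=
  (3%:R / 10%:R) * d < (#|[set v in Fplus u | yvec S v]|)%:R.
End Graph.

(* Main.v *)
Require Import Defs.
From HB Require Import structures.
From mathcomp Require Import all_boot all_order all_algebra lra.
Import Order.TTheory GRing.Theory Num.Theory.
Local Open Scope ring_scope.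

Lemma sum_abs (R : realFieldType) (U V : finType) (w : U -> V -> int)
  (hw : forall u v, w u v \in [:: -1; 0; 1]) u (A : {set V}) :
  A \subset F w u -> (\sum_(v in A) `|w u v|)%:~R = (#|A|%:R : R).
Proof.
move=> sub.
rewrite (eq_bigr (fun _ => 1)); last first.
  move=> v vA; have := subsetP sub v vA; rewrite inE.
  by have := hw u v; rewrite !inE => /or3P [] /eqP ->.
by rewrite sumr_const pmulrn intz.
Qed.

Theorem mainTheorem4 (R : realFieldType) (U V : finType) (w : U -> V -> int)
  (d : R) (S : {set U})
  (hw : forall u v, w u v \in [:: -1; 0; 1])
  (hd : 0 < d)
  (hdeg : forall u : U, (#|F w u|)%:R <= (12%:R / 10%:R) * d)
  (hpos : forall u : U, (45%:R / 100%:R) * d <= (#|Fplus w u|)%:R)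
  (hS : strong_unique_nb_prop w (11%:R / 12%:R : R) S) :
  forall u : U, hhat w d S u = (u \in S).
Proof.
move=> u.
have subUF : UF w u S \subset F w u by apply/subsetP => v; rewrite inE => /andP[].
set N := F w u :\: UF w u S.
have hcard : #|F w u| = (#|UF w u S| + #|N|)%N.
  by rewrite -(cardsID (UF w u S) (F w u)); rewrite (setIidPr subUF).
have hU := hS u; rewrite /unique_nb_prop !(@sum_abs R _ _ w hw) // in hU.
have hN : (#|N|%:R : R) <= d / 10.
  have := hdeg u; move: hU; rewrite hcard natrD => *; lra.
rewrite /hhat.
case: (boolP (u \in S)) => uS.
- have sub1 : Fplus w u :&: UF w u S \subset [set v in Fplus w u | yvec w S v].
    apply/subsetP => v; rewrite !inE => /andP[/andP[vF /eqP wp] /andP[_ vnot]].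
    rewrite vF wp eqxx /= /yvec /sgn (bigD1 u) /=; last by rewrite uS inE wp.
    rewrite big1 ?addr0 ?wp //.
    move=> u' /andP[/andP[u'S vF'] u'u]; exfalso; move: vnot.
    by apply/negP/negPn; apply/bigcupP; exists u' => //; rewrite !inE u'u.
  have sub2 : Fplus w u \subset (Fplus w u :&: UF w u S) :|: N.
    apply/subsetP => v; rewrite !inE => /andP[vF wp].
    by rewrite vF wp /=; case: (_ \notin _).
  have c1 := subset_leq_card sub1.
  have c2 := leq_trans (subset_leq_card sub2) (leq_card_setU _ _).
  have := hpos u.
  move: c1 c2; rewrite -!(ler_nat R) natrD => c1 c2.
  move=> *; apply/idP; lra.
- have sub1 : [set v in Fplus w u | yvec w S v] \subset N.
    apply/subsetP => v; rewrite !inE => /andP[/andP[vF _] yv].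
    rewrite vF andbT; apply/negP => /andP[_ vnot]; move: yv.
    rewrite /yvec /sgn big1 ?ltxx //.
    move=> u' /andP[u'S vF']; exfalso; move: vnot.
    apply/negP/negPn; apply/bigcupP; exists u' => //; rewrite !inE u'S andbT.
    by apply: contraNneq uS => <-.
  have := subset_leq_card sub1; rewrite -(ler_nat R) => c1.
  apply/negbTE; rewrite -leNgt; lra.
Qed.
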